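(* Let $n\ge 2$ and let $\mathbf p^0\in\Delta_n$ be arbitrary. Let $m$ be the number of indices $i$ with $p^0_i=0$ (so $0\le m\le n-1$). Consider the trajectory $\mathbf p^{t+1}=F(\mathbf p^t)$, $t=0,1,\dots$, and $\mathbf r^t$ defined by $r^t_i=(1-p^t_i)/(n-1)$. Then the limits $\mathbf p^\infty=\lim_{t\to\infty}\mathbf p^t$ and $\mathbf r^\infty=\lim_{t\to\infty}\mathbf r^t$ exist, $\mathbf p^\infty$ is a fixed point of $F$, and: 1) if $m=0$, then $\mathbf p^\infty=\mathbf r^\infty$ and $p^\infty_i=r^\infty_i=\frac1n$ for all $i$; 2) if $1\le m<n$, then $\mathbf p^\infty\neq\mathbf r^\infty$; for every $j$ with $p^0_j=0$ one has $p^\infty_j=0$ and $r^\infty_j=\frac{1}{n-1}$, and for every $i$ with $p^0_i>0$ one has $p^\infty_i=\frac{1}{n-m}$ and $r^\infty_i=\frac{n-m-1}{(n-1)(n-m)}$. Moreover, among these limit states only $\mathbf p^\infty=(\frac1n,\dots,\frac1n)$ is stable: it is a locally asymptotically stable fixed point of $F$ on $\Delta_n$, while every limit state with $m\ge1$ is an unstable fixed point of $F$ on $\Delta_n$.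
   Context: Let $n\ge 2$ and $\Delta_n=\{\mathbf p=(p_1,\dots,p_n)\in\mathbb R^n: p_i\ge 0,\ \sum_i p_i=1\}$ (stochastic vectors). For $\mathbf p\in\Delta_n$ put $L(\mathbf p)=\sum_{k=1}^n p_k^2$ and define $F:\Delta_n\to\Delta_n$ by $F(\mathbf p)_i=p_i\,\frac{n-p_i}{n-L(\mathbf p)}$. (This is the map $p_i\mapsto p_i(1+r_i)/(1+\sum_k p_k r_k)$ with $r_i=(1-p_i)/(n-1)$.) Write $L^t=L(\mathbf p^t)$. *)

(* Defs.v *)
From HB Require Import structures.
From mathcomp Require Import all_boot all_order all_algebra.
From mathcomp Require Import all_classical all_reals all_analysis.
Set Implicit Arguments. Unset Strict Implicit. Unset Printing Implicit Defensive.
Import Order.TTheory GRing.Theory Num.Theory.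
Import numFieldNormedType.Exports.
Local Open Scope ring_scope.
Local Open Scope classical_set_scope.

Section Defs.
Variables (R : realType) (n : nat).

Definition stochastic (p : 'rV[R]_n) : Prop :=
  (forall i, 0 <= p 0 i) /\ \sum_(i < n) p 0 i = 1.

Definition Lsq (p : 'rV[R]_n) : R := \sum_(k < n) p 0 k ^+ 2.

Definition Fmap (p : 'rV[R]_n) : 'rV[R]_n :=
  \row_i (p 0 i * (n%:R - p 0 i) / (n%:R - Lsq p)).

Definition rvec (p : 'rV[R]_n) : 'rV[R]_n :=
  \row_i ((1 - p 0 i) / (n%:R - 1)).

Definition traj (p0 : 'rV[R]_n) (t : nat) : 'rV[R]_n := iter t Fmap p0.

Definition nzeros (p : 'rV[R]_n) : nat := #|[set i : 'I_n | p 0 i == 0]|.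

Definition lyap_stable (f : 'rV[R]_n -> 'rV[R]_n) (D : 'rV[R]_n -> Prop)
  (x : 'rV[R]_n) : Prop :=
  forall e : R, 0 < e -> exists2 d : R, 0 < d &
    forall q, D q -> `|q - x| < d -> forall t : nat, `|iter t f q - x| < e.

Definition attractive (f : 'rV[R]_n -> 'rV[R]_n) (D : 'rV[R]_n -> Prop)
  (x : 'rV[R]_n) : Prop :=
  exists2 d : R, 0 < d &
    forall q, D q -> `|q - x| < d -> (fun t => iter t f q) @ \oo --> x.

Definition loc_asymp_stable_fixed f D x : Prop :=
  D x /\ f x = x /\ lyap_stable f D x /\ attractive f D x.

Definition unstable_fixed f D x : Prop :=
  D x /\ f x = x /\ ~ lyap_stable f D x.

End Defs.

(* Main.v *)
Require Import Defs.
From HB Require Import structures.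
From mathcomp Require Import all_boot all_order all_algebra.
From mathcomp Require Import all_classical all_reals all_analysis.
From mathcomp Require Import ring lra.
Import Order.TTheory GRing.Theory Num.Theory.
Import numFieldNormedType.Exports.
Local Open Scope ring_scope.
Local Open Scope classical_set_scope.
Set Implicit Arguments. Unset Strict Implicit.


Section S.
Variables (R : realType) (n : nat) (hn : (2 <= n)%N).

Lemma hnR : (2:R) <= n%:R.
Proof. by rewrite (ler_nat R 2 n). Qed.

Lemma norm_le_entries (x : 'rV[R]_n) e : 0 <= e -> (forall i, `|x 0 i| <= e) -> `|x| <= e.
Proof.
move=> e0 H. rewrite [X in X <= _]/Num.norm /= mx_normrE.
apply: bigmax_le => // -[i j] _ /=. by rewrite ord1.
Qed.

Lemma entry_le_norm (x : 'rV[R]_n) i : `|x 0 i| <= `|x|.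
Proof.
rewrite [X in _ <= X]/Num.norm /= mx_normrE.
apply: (le_bigmax _ _ (0, i)).
Qed.

Lemma stoch_le1 (p : 'rV[R]_n) : stochastic p -> forall i, p 0 i <= 1.
Proof. case=> h0 h1 i. by rewrite -h1 (bigD1 i) //= lerDl sumr_ge0. Qed.

Lemma Lsq_le (p : 'rV[R]_n) M : stochastic p -> (forall i, p 0 i <= M) -> Lsq p <= M.
Proof.
case=> h0 h1 hM. rewrite /Lsq.
apply: (le_trans (y := \sum_i M * p 0 i)).
  by apply: ler_sum => i _; rewrite expr2 ler_wpM2r.
by rewrite -mulr_sumr h1 mulr1.
Qed.

Lemma Lsq_ge (p : 'rV[R]_n) b : stochastic p -> 0 <= b ->
  (forall i, p 0 i != 0 -> b <= p 0 i) -> b <= Lsq p.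
Proof.
case=> h0 h1 b0 hb. rewrite /Lsq.
apply: (le_trans (y := \sum_i b * p 0 i)).
  by rewrite -mulr_sumr h1 mulr1.
apply: ler_sum => i _; rewrite expr2.
have [->|nz] := eqVneq (p 0 i) 0; first by rewrite !mulr0.
by rewrite ler_wpM2r // hb.
Qed.

Lemma denom_pos (p : 'rV[R]_n) : stochastic p -> 1 <= n%:R - Lsq p.
Proof.
move=> sp. have := Lsq_le sp (stoch_le1 sp). have := hnR. lra.
Qed.

Lemma FmapE (p : 'rV[R]_n) i :
  Fmap p 0 i = p 0 i * (n%:R - p 0 i) / (n%:R - Lsq p).
Proof. by rewrite mxE. Qed.

Lemma F_stoch (p : 'rV[R]_n) : stochastic p -> stochastic (Fmap p).
Proof.
move=> sp; have := denom_pos sp => hd.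
have hl1 := stoch_le1 sp. have h2 := hnR.
case: (sp) => h0 h1; split.
  move=> i; rewrite FmapE divr_ge0 //; last lra.
  by rewrite mulr_ge0 //; have := hl1 i; lra.
under eq_bigr do rewrite FmapE.
rewrite -mulr_suml.
under eq_bigr do rewrite mulrBr.
rewrite sumrB -mulr_suml h1 mul1r.
have -> : \sum_i p 0 i * p 0 i = Lsq p by apply: eq_bigr => i _; rewrite expr2.
rewrite divff //; lra.
Qed.

Lemma F_zero (p : 'rV[R]_n) i : stochastic p -> (Fmap p 0 i == 0) = (p 0 i == 0).
Proof.
move=> sp; have := denom_pos sp => hd. have := stoch_le1 sp i. have h2 := hnR => hi.
rewrite FmapE -mulrA mulf_eq0 mulf_eq0 invr_eq0.
have -> : (n%:R - p 0 i == 0) = false by apply/negbTE; rewrite lt0r_neq0 //; lra.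
have -> : (n%:R - Lsq p == 0) = false by apply/negbTE; rewrite lt0r_neq0 //; lra.
by rewrite !orbF.
Qed.

Lemma F_mono (p : 'rV[R]_n) i j : stochastic p -> p 0 i <= p 0 j -> Fmap p 0 i <= Fmap p 0 j.
Proof.
move=> sp hij; have := denom_pos sp => hd. have := stoch_le1 sp i. have := stoch_le1 sp j.
have h2 := hnR. case: sp => h0 _. have := h0 i. have := h0 j => *.
rewrite !FmapE ler_pM2r ?invr_gt0; last lra. nra.
Qed.

Lemma F_min (p : 'rV[R]_n) J : stochastic p ->
  (forall i, p 0 i != 0 -> p 0 J <= p 0 i) -> p 0 J <= Fmap p 0 J.
Proof.
move=> sp hJ; have := denom_pos sp => hd. have hJ0 : 0 <= p 0 J by case: sp.
have hL := Lsq_ge sp hJ0 hJ.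
rewrite FmapE ler_pdivlMr; last lra. nra.
Qed.

Lemma F_contract (p : 'rV[R]_n) I J : stochastic p ->
  (forall i, p 0 i <= p 0 I) -> 0 <= p 0 J ->
  n%:R * (Fmap p 0 I - Fmap p 0 J) <= (n%:R - p 0 J) * (p 0 I - p 0 J).
Proof.
move=> sp hI hJ0; have := denom_pos sp => hd.
have hL := Lsq_le sp hI. have h2 := hnR. have := stoch_le1 sp I. have := hI J => *.
rewrite !FmapE -mulrBl mulrA ler_pdivrMr; last lra.
set a := p 0 I; set b := p 0 J; set L := Lsq p.
rewrite -subr_ge0.
have -> : (n%:R - b) * (a - b) * (n%:R - L) - n%:R * (a * (n%:R - a) - b * (n%:R - b))
  = (n%:R - b) * (a - b) * (a - L) + (a - b) * (a * b) by ring.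
apply: addr_ge0; apply: mulr_ge0; try apply: mulr_ge0; rewrite /a /b /L; lra.
Qed.
End S.
Section S2.
Variables (R : realType) (n : nat) (hn : (2 <= n)%N).

Lemma exists_max (q : 'rV[R]_n) : exists I, forall i, q 0 i <= q 0 I.
Proof.
have i0 : 'I_n := Ordinal (ltnW hn).
case: (@arg_maxP _ _ _ i0 xpredT (fun i => q 0 i) isT) => I _ HI.
by exists I => i; apply: HI.
Qed.

Lemma exists_min (q : 'rV[R]_n) : stochastic q ->
  exists J, q 0 J != 0 /\ forall i, q 0 i != 0 -> q 0 J <= q 0 i.
Proof.
case=> h0 h1.
case: (pickP (fun i => q 0 i != 0)) => [i0 Hi0|H0]; last first.
  move: h1; rewrite big1 => [/eqP|i _]; first by rewrite eq_sym oner_eq0.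
  by have := H0 i => /= /negbFE /eqP.
case: (@arg_minP _ _ _ i0 (fun i => q 0 i != 0) (fun i => q 0 i) Hi0) => J HJ HJm.
by exists J; split => // i /HJm.
Qed.

Lemma trajS (p0 : 'rV[R]_n) t : traj p0 t.+1 = Fmap (traj p0 t).
Proof. by []. Qed.

Lemma traj_inv (p0 : 'rV[R]_n) I J : stochastic p0 -> (forall i, p0 0 i <= p0 0 I) ->
  p0 0 J != 0 -> (forall i, p0 0 i != 0 -> p0 0 J <= p0 0 i) ->
  forall t, [/\ stochastic (traj p0 t),
     (forall i, (traj p0 t 0 i == 0) = (p0 0 i == 0)),
     (forall i, traj p0 t 0 i <= traj p0 t 0 I),
     (forall i, p0 0 i != 0 -> traj p0 t 0 J <= traj p0 t 0 i) &
     (p0 0 J <= traj p0 t 0 J /\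
     traj p0 t 0 I - traj p0 t 0 J <= ((n%:R - p0 0 J) / n%:R) ^+ t * (p0 0 I - p0 0 J))].
Proof.
move=> sp0 hI hJ0 hJ.
have h2 := hnR R hn.
have b0 : 0 <= p0 0 J by case: sp0.
have b1 := stoch_le1 sp0 J.
elim=> [|t [st hz hIt hJt [hbt hD]]].
  by split => //; split => //; rewrite expr0 mul1r.
rewrite trajS.
have hJt' : forall i, traj p0 t 0 i != 0 -> traj p0 t 0 J <= traj p0 t 0 i.
  by move=> i; rewrite hz; apply: hJt.
split.
- exact: F_stoch.
- by move=> i; rewrite F_zero // hz.
- by move=> i; apply: F_mono.
- by move=> i /hJt ?; apply: F_mono.
split; first exact: (le_trans hbt (F_min hn st hJt')).
have hc := F_contract hn st hIt (le_trans b0 hbt).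
have hIJ := hIt J.
set X := _ ^+ t * _ in hD.
rewrite exprS -mulrA -/X mulrAC ler_pdivlMr; last lra.
have : (n%:R - traj p0 t 0 J) * (traj p0 t 0 I - traj p0 t 0 J) <=
   (n%:R - p0 0 J) * X.
  apply: (le_trans (y := (n%:R - p0 0 J) * (traj p0 t 0 I - traj p0 t 0 J))).
    nra.
  by rewrite ler_wpM2l //; lra.
lra.
Qed.

Definition supp (q : 'rV[R]_n) : {set 'I_n} := [set i | q 0 i != 0].
Definition plim (q : 'rV[R]_n) : 'rV[R]_n :=
  \row_i (if q 0 i == 0 then 0 else (#|supp q|%:R)^-1).

Lemma sum_supp (q x : 'rV[R]_n) : stochastic x ->
  (forall i, (x 0 i == 0) = (q 0 i == 0)) -> \sum_(i in supp q) x 0 i = 1.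
Proof.
case=> h0 h1 hz. rewrite -h1 [RHS](bigID (fun i => i \in supp q)) /=.
rewrite [X in _ + X]big1 ?addr0 // => i.
by rewrite inE negbK -hz => /eqP.
Qed.

Lemma card_supp_gt0 (q : 'rV[R]_n) : stochastic q -> (0 < #|supp q|)%N.
Proof.
move=> sq; rewrite lt0n; apply/negP => /eqP /cards0_eq E.
have := sum_supp sq (fun i => erefl).
by rewrite E big_set0 => /eqP; rewrite eq_sym oner_eq0.
Qed.

Lemma kbounds (q x : 'rV[R]_n) a b : stochastic q -> stochastic x ->
  (forall i, (x 0 i == 0) = (q 0 i == 0)) ->
  (forall i, q 0 i != 0 -> a <= x 0 i /\ x 0 i <= b) ->
  a <= (#|supp q|%:R)^-1 <= b.
Proof.
move=> sq sx hz hab.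
have kp : 0 < (#|supp q|%:R : R) by rewrite ltr0n card_supp_gt0.
have hs := sum_supp sx hz.
apply/andP; split.
  rewrite -(ler_pM2l kp) mulfV ?gt_eqF // mulr_natl -sumr_const -hs.
  by apply: ler_sum => i; rewrite inE => /hab [].
rewrite -(ler_pM2l kp) mulfV ?gt_eqF // mulr_natl -sumr_const -hs.
by apply: ler_sum => i; rewrite inE => /hab [].
Qed.

Lemma main (q : 'rV[R]_n) : stochastic q -> exists c D0 : R,
  [/\ 0 <= c, c < 1, 0 <= D0, D0 <= 2 * `|q - plim q|
    & forall t i, `|traj q t 0 i - plim q 0 i| <= c ^+ t * D0].
Proof.
move=> sq.
have h2 := hnR R hn.
have [I hI] := exists_max q.
have [J [hJ0 hJ]] := exists_min sq.
have b0 : 0 < q 0 J by rewrite lt0r hJ0 /=; case: sq => h _; apply: h.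
have b1 := stoch_le1 sq J.
have hIJ := hI J.
have hinv := traj_inv sq hI hJ0 hJ.
have kb : q 0 J <= (#|supp q|%:R)^-1 <= q 0 I.
  apply: (kbounds sq sq) => // i /hJ ?; split => //.
case/andP: kb => kb1 kb2.
exists ((n%:R - q 0 J) / n%:R), (q 0 I - q 0 J); split.
- by apply: divr_ge0; lra.
- by rewrite ltr_pdivrMr; lra.
- lra.
- have a1 := entry_le_norm (q - plim q) I.
  have a2 := entry_le_norm (q - plim q) J.
  rewrite !mxE (negbTE hJ0) in a1 a2.
  have hI0 : q 0 I != 0 by apply/eqP => E; lra.
  rewrite (negbTE hI0) in a1.
  have := ler_norm (q 0 I - (#|supp q|%:R)^-1).
  have := ler_norm ((#|supp q|%:R)^-1 - q 0 J). rewrite distrC.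
  lra.
move=> t i.
have [st hz hIt hJt [hbt hD]] := hinv t.
have hc : 0 <= ((n%:R - q 0 J) / n%:R) ^+ t * (q 0 I - q 0 J).
  by apply: mulr_ge0; [apply: exprn_ge0; apply: divr_ge0|]; lra.
rewrite mxE.
have [E|nz] := eqVneq (q 0 i) 0.
  by move: (hz i); rewrite E eqxx => /eqP ->; rewrite subr0 normr0.
have kb : traj q t 0 J <= (#|supp q|%:R)^-1 <= traj q t 0 I.
  apply: (kbounds sq st) => // j hj; split; [exact: hJt | exact: hIt].
case/andP: kb => kc1 kc2.
have := hJt i nz; have := hIt i => ? ?.
rewrite ler_norml; apply/andP; split; lra.
Qed.

Lemma conv_entries (u : nat -> 'rV[R]_n) (v : 'rV[R]_n) (e : nat -> R) :
  (forall t, 0 <= e t) -> (forall t i, `|u t 0 i - v 0 i| <= e t) ->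
  e @ \oo --> 0 -> u @ \oo --> v.
Proof.
move=> e0 he ce. apply/cvgrPdist_le => eps eps0.
move/cvgrPdist_le: ce => /(_ eps eps0).
apply: filterS => t /=. rewrite sub0r normrN => het.
rewrite distrC; apply: le_trans het.
apply: (le_trans _ (ler_norm _)).
apply: norm_le_entries => // i; rewrite !mxE; exact: he.
Qed.

Lemma geo_cvg (c D0 : R) : 0 <= c -> c < 1 -> (fun t => c ^+ t * D0) @ \oo --> 0.
Proof.
move=> c0 c1. rewrite -(mul0r D0). apply: cvgMl. apply: cvg_expr.
by rewrite ger0_norm.
Qed.

Lemma plimE (q : 'rV[R]_n) i : plim q 0 i = if q 0 i == 0 then 0 else (#|supp q|%:R)^-1.
Proof. by rewrite mxE. Qed.

Lemma plim_stoch (q : 'rV[R]_n) : stochastic q -> stochastic (plim q).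
Proof.
move=> sq; have kp : 0 < (#|supp q|%:R : R) by rewrite ltr0n card_supp_gt0.
split.
  by move=> i; rewrite plimE; case: ifP => // _; rewrite invr_ge0 ltW.
under eq_bigr do rewrite plimE.
have -> : \sum_i (if q 0 i == 0 then 0 else (#|supp q|%:R)^-1) =
          \sum_(i in supp q) (#|supp q|%:R : R)^-1.
  by rewrite [RHS]big_mkcond; apply: eq_bigr => i _; rewrite inE if_neg.
by rewrite sumr_const -[LHS]mulr_natl mulfV ?gt_eqF.
Qed.

Lemma plim_fixed (q : 'rV[R]_n) : stochastic q -> Fmap (plim q) = plim q.
Proof.
move=> sq; have sp := plim_stoch sq.
have h2 := hnR R hn.
set c := (#|supp q|%:R : R)^-1.
have hL : Lsq (plim q) = c.
  rewrite /Lsq; case: (sp) => _ h1.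
  rewrite -[RHS]mulr1 -h1 mulr_sumr; apply: eq_bigr => i _.
  by rewrite plimE expr2; case: ifP => _; rewrite ?mulr0.
have hc1 : c <= 1.
  have [i0 Hi0] : exists i, q 0 i != 0.
    have := card_supp_gt0 sq; case/card_gt0P => i; rewrite inE => ?; by exists i.
  by have := stoch_le1 sp i0; rewrite plimE (negbTE Hi0).
apply/rowP => i; rewrite FmapE hL plimE.
case: ifP => _; first by rewrite !mul0r.
rewrite -mulrA mulfV ?mulr1 //; apply: lt0r_neq0; move: hc1; rewrite /c; lra.
Qed.
End S2.

Section T.
Variables (R : realType) (n : nat) (hn : (2 <= n)%N).

Lemma plim_full (q : 'rV[R]_n) : (forall i, q 0 i != 0) -> forall i, plim q 0 i = n%:R^-1.
Proof.
move=> nz i; rewrite plimE (negbTE (nz i)).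
have -> : supp q = [set: 'I_n]%SET by apply/setP => j; rewrite !inE nz.
by rewrite cardsT card_ord.
Qed.

Lemma near_pos (q x : 'rV[R]_n) : (forall i, x 0 i = n%:R^-1) ->
  `|q - x| < n%:R^-1 -> forall i, q 0 i != 0.
Proof.
move=> hx hq i. have := entry_le_norm (q - x) i. rewrite !mxE hx => h.
have := ler_norm (n%:R^-1 - q 0 i); rewrite distrC => h'.
apply/eqP => E; rewrite E in h h'; lra.
Qed.

Lemma rvec_bound (a b : 'rV[R]_n) i : `|rvec a 0 i - rvec b 0 i| <= `|a 0 i - b 0 i|.
Proof.
have h2 := hnR R hn.
rewrite !mxE -mulrBl normrM.
have -> : 1 - a 0 i - (1 - b 0 i) = - (a 0 i - b 0 i) by ring.
rewrite normrN ler_piMr // ger0_norm ?invr_ge0; try lra.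
rewrite invf_le1; lra.
Qed.

Lemma bound_conv (q : 'rV[R]_n) c D0 : 0 <= c -> c < 1 -> 0 <= D0 ->
  (forall t i, `|traj q t 0 i - plim q 0 i| <= c ^+ t * D0) ->
  traj q @ \oo --> plim q.
Proof.
move=> c0 c1 d0 hb. apply: (conv_entries (e := fun t => c ^+ t * D0)) => //.
  by move=> t; apply: mulr_ge0 => //; apply: exprn_ge0.
exact: geo_cvg.
Qed.

End T.

Lemma nzerosE (R : realType) n (p : 'rV[R]_n) : nzeros p = #|[set i | p 0 i == 0]%SET|.
Proof.
apply: eq_card => i; rewrite inE; apply/idP/idP => [/set_mem //|H]; exact: mem_set.
Qed.

Lemma subE (R : realType) n (A B : 'rV[R]_n) i : (A - B) 0 i = A 0 i - B 0 i.
Proof. by rewrite !mxE. Qed.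

Unset Implicit Arguments.

Theorem theorem1 (R : realType) (n : nat) (hn : (2 <= n)%N)
  (p0 : 'rV[R]_n) (hp0 : stochastic p0) :
  let m := nzeros p0 in
  exists pinf rinf : 'rV[R]_n,
    traj p0 @ \oo --> pinf /\
    (fun t => rvec (traj p0 t)) @ \oo --> rinf /\
    Fmap pinf = pinf /\
    (m = 0%N ->
       pinf = rinf /\ (forall i, pinf 0 i = 1 / n%:R /\ rinf 0 i = 1 / n%:R)) /\
    ((1 <= m < n)%N ->
       pinf != rinf /\
       (forall j, p0 0 j = 0 -> pinf 0 j = 0 /\ rinf 0 j = 1 / (n%:R - 1)) /\
       (forall i, 0 < p0 0 i ->
          pinf 0 i = 1 / (n%:R - m%:R) /\
          rinf 0 i = (n%:R - m%:R - 1) / ((n%:R - 1) * (n%:R - m%:R)))) /\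
    (m = 0%N -> loc_asymp_stable_fixed (@Fmap R n) (@stochastic R n) pinf) /\
    ((1 <= m)%N -> unstable_fixed (@Fmap R n) (@stochastic R n) pinf).
Proof.
move=> m.
have h2 := hnR R hn.
have n0 : (n%:R : R) != 0 by apply: lt0r_neq0; lra.
have n1 : (n%:R - 1 : R) != 0 by apply: lt0r_neq0; lra.
set x := plim p0.
have [c [D0 [c0 c1 D00 _ hb]]] := main hn hp0.
have cvx : traj p0 @ \oo --> x by exact: (bound_conv c0 c1 D00 hb).
have xfix : Fmap x = x := plim_fixed hn hp0.
have xst : stochastic x := plim_stoch hp0.
have hk : ((#|supp p0| + m)%N = n).
  have -> : supp p0 = (~: [set i | p0 0 i == 0])%SET by apply/setP => i; rewrite !inE.
  by rewrite /m nzerosE addnC cardsC card_ord.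
have hkR : (#|supp p0|%:R : R) = n%:R - m%:R by apply/eqP; rewrite eq_sym subr_eq -natrD hk.
have kp : 0 < (#|supp p0|%:R : R) by rewrite ltr0n card_supp_gt0.
exists x, (rvec x); split => //.
split.
  apply: (conv_entries (e := fun t => c ^+ t * D0)).
  - by move=> t; apply: mulr_ge0 => //; apply: exprn_ge0.
  - by move=> t i; apply: le_trans (rvec_bound hn _ _ i) (hb t i).
  - exact: geo_cvg.
split => //.
have m0nz : m = 0%N -> forall i, p0 0 i != 0.
  move=> hm i; apply/negP => /eqP E.
  have : i \in [set i | p0 0 i == 0]%SET by rewrite inE E.
  by move: hm; rewrite /m nzerosE => /eqP; rewrite cards_eq0 => /eqP ->; rewrite inE.
have m0x : m = 0%N -> forall i, x 0 i = n%:R^-1.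
  by move=> hm; apply: plim_full; apply: m0nz.
split.
  move=> hm.
  have hr : forall i, rvec x 0 i = 1 / n%:R.
    by move=> i; rewrite mxE m0x //; field; rewrite n0 n1.
  split; first by apply/rowP => i; rewrite hr m0x // div1r.
  by move=> i; rewrite hr m0x // div1r.
split.
  case/andP => hm1 hmn.
  have [j0 hj0] : exists j, p0 0 j = 0.
    move: hm1; rewrite /m nzerosE => /card_gt0P [j]; rewrite inE => /eqP; by exists j.
  have xz : forall j, p0 0 j = 0 -> x 0 j = 0 /\ rvec x 0 j = 1 / (n%:R - 1).
    by move=> j hj; rewrite mxE hj eqxx; split => //; rewrite mxE plimE hj eqxx subr0.
  split.
    apply/eqP => E. have [a b] := xz j0 hj0.
    have := congr1 (fun M : 'rV[R]_n => M 0 j0) E => /=; rewrite a b => /eqP.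
    by rewrite eq_sym mulf_eq0 oner_eq0 invr_eq0 (negbTE n1).
  split => // i hi.
  have hi' : p0 0 i == 0 = false by rewrite gt_eqF.
  rewrite mxE hi' -hkR; split; first by rewrite div1r.
  rewrite mxE plimE hi'.
  by field; rewrite n1 gt_eqF.
split.
  move=> hm; split => //; split => //.
  have hx := m0x hm.
  split.
    move=> e e0.
    exists (Num.min (n%:R^-1) (e / 2)).
      by rewrite lt_min invr_gt0 divr_gt0 //; lra.
    move=> q sq; rewrite lt_min => /andP [dq1 dq2] t.
    have qnz := near_pos hx dq1.
    have pq : plim q = x by apply/rowP => i; rewrite plim_full // hx.
    have [c' [D0' [c0' c1' D00' hD hb']]] := main hn sq.
    rewrite pq in hD hb'.
    apply: (le_lt_trans (y := D0')).
      apply: norm_le_entries => // i; rewrite subE.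
      apply: le_trans (hb' t i) _. by apply: ler_piMl => //; apply: exprn_ile1 => //; apply: ltW.
    apply: (le_lt_trans hD); lra.
  exists (n%:R^-1); first by rewrite invr_gt0; lra.
  move=> q sq dq.
  have qnz := near_pos hx dq.
  have pq : plim q = x by apply/rowP => i; rewrite plim_full // hx.
  have [c' [D0' [c0' c1' D00' hD hb']]] := main hn sq.
  rewrite -pq. exact: (bound_conv c0' c1' D00' hb').
move=> hm1; split => //; split => //.
have [j0 hj0] : exists j, p0 0 j = 0.
  move: hm1; rewrite /m nzerosE => /card_gt0P [j]; rewrite inE => /eqP; by exists j.
have xj : x 0 j0 = 0 by rewrite plimE hj0 eqxx.
have xb : forall i, 0 <= x 0 i <= 1.
  by move=> i; apply/andP; split; [case: xst|apply: stoch_le1].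
move=> H.
have [d d0 Hd] := H (n%:R^-1 / 2) (ltac:(rewrite divr_gt0 // invr_gt0; lra)).
set s := d / (d + 1).
have s0 : 0 < s by rewrite divr_gt0 //; lra.
have s1 : s < 1 by rewrite ltr_pdivrMr; lra.
have sd : s < d by rewrite ltr_pdivrMr; nra.
have ni0 : 0 < (n%:R : R)^-1 by rewrite invr_gt0; lra.
have ni1 : (n%:R : R)^-1 <= 1 by rewrite invf_le1; lra.
set q : 'rV[R]_n := \row_i ((1 - s) * x 0 i + s * n%:R^-1).
have qE : forall i, q 0 i = (1 - s) * x 0 i + s * n%:R^-1 by move=> i; rewrite mxE.
have sq : stochastic q.
  split.
    move=> i; rewrite qE; have := xb i => /andP [? ?].
    apply: addr_ge0; apply: mulr_ge0; lra.
  under eq_bigr do rewrite qE.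
  rewrite big_split /= -mulr_sumr sumr_const card_ord.
  case: xst => _ ->. rewrite -[s / n%:R *+ n]mulr_natr divfK //; ring.
have dq : `|q - x| < d.
  apply: (le_lt_trans (y := s)) => //.
  apply: norm_le_entries => [|i]; first lra.
  rewrite subE qE; have := xb i => /andP [? ?].
  have -> : (1 - s) * x 0 i + s * n%:R^-1 - x 0 i = s * (n%:R^-1 - x 0 i) by ring.
  rewrite normrM ger0_norm; last lra.
  rewrite -[X in _ <= X]mulr1; apply: ler_wpM2l; first lra.
  rewrite ler_norml; apply/andP; split; lra.
have qnz : forall i, q 0 i != 0.
  move=> i; rewrite qE; have := xb i => /andP [? ?].
  apply: lt0r_neq0. have : 0 < s * n%:R^-1 by apply: mulr_gt0.
  have : 0 <= (1 - s) * x 0 i by apply: mulr_ge0; lra.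
  lra.
have [c' [D0' [c0' c1' D00' _ hb']]] := main hn sq.
have /cvgrPdist_lt /(_ (n%:R^-1 / 2)) := geo_cvg D0' c0' c1'.
case; first by rewrite divr_gt0 //.
move=> N _ HN. have := HN N (leqnn N) => /=; rewrite sub0r normrN => hN.
have hd : `|traj q N - x| < n%:R^-1 / 2 := Hd q sq dq N.
have hb1 := hb' N j0; rewrite plim_full // in hb1.
have hb2 := entry_le_norm (traj q N - x) j0; rewrite subE xj subr0 in hb2.
have := ler_norm (traj q N 0 j0).
have := ler_norm (n%:R^-1 - traj q N 0 j0); rewrite distrC.
have := ler_norm (c' ^+ N * D0').
move=> *. lra.
Qed.
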